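(* If $G$ is a cyclically $4$-edge-connected cubic bipartite graph with at least $8$ vertices, then every edge of $G$ is contained in at least $3$ perfect matchings of $G$.
   Context: An edge-cut $E(A,B)$ is cyclic if both $G[A]$ and $G[B]$ contain a cycle; $G$ is cyclically $4$-edge-connected if it has no cyclic edge-cut with fewer than four edges. *)

(* Defs.v *)
From mathcomp Require Import all_boot.
Set Implicit Arguments. Unset Strict Implicit. Unset Printing Implicit Defensive.

Section Graphs.
Variables (V : finType) (adj : rel V).

Definition simple_graph : Prop := symmetric adj /\ irreflexive adj.

Definition nbhd (v : V) : {set V} := [set u | adj v u].
Definition cubic : Prop := forall v : V, #|nbhd v| = 3.

Definition bipartite : Prop :=
  exists c : V -> bool, forall u v, adj u v -> c u != c v.

Definition has_cycle_in (A : {set V}) : Prop :=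
  exists p : seq V, [/\ 3 <= size p, uniq p, cycle adj p & all (mem A) p].

(* number of edges of the edge-cut E(A, V \ A) (each edge counted once, as the
   ordered pair (a, b) with a in A and b outside A) *)
Definition cut_size (A : {set V}) : nat :=
  #|[set p : V * V | [&& p.1 \in A, p.2 \notin A & adj p.1 p.2]]|.

Definition cyc4_edge_connected : Prop :=
  forall A : {set V}, has_cycle_in A -> has_cycle_in (~: A) -> 4 <= cut_size A.

Definition is_edge (e : {set V}) : bool :=
  [exists u, exists v, adj u v && (e == [set u; v])].

Definition perfect_matching (M : {set {set V}}) : bool :=
  [forall e in M, is_edge e] &&
  [forall v, #|[set e in M | v \in e]| == 1].

Definition num_pm_containing (u v : V) : nat :=
  #|[set M : {set {set V}} | perfect_matching M && ([set u; v] \in M)]|.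

End Graphs.

(* Main.v *)
From Stdlib Require Import Lia.
Require Import Defs.
From mathcomp Require Import all_boot.
Set Implicit Arguments. Unset Strict Implicit. Unset Printing Implicit Defensive.

Ltac toP := repeat match goal with H : is_true (leq _ _) |- _ => move/leP: H => H end;
  try apply/leP; unfold addn, subn, muln in *.

Section Hall.
Variables (T : finType) (r : rel T).

Definition NB (Y S : {set T}) : {set T} := [set y in Y | [exists s in S, r s y]].

Lemma hall_ind n : forall X Y : {set T}, #|X| <= n ->
  (forall S : {set T}, S \subset X -> #|S| <= #|NB Y S|) ->
  exists f : T -> T, {in X &, injective f} /\
    forall z, z \in X -> (f z \in Y) && r z (f z).
Proof.
elim: n => [|n IH] X Y hX hH.
  exists id; split; first by move=> a b _ _.
  by move=> z zX; move: hX; rewrite leqn0 => /eqP/cards0_eq X0; rewrite X0 inE in zX.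
case: (boolP [exists S0 : {set T}, [&& S0 \proper X, S0 != set0 & #|NB Y S0| <= #|S0|]]).
- case/existsP=> S0 /and3P[pS0 nS0 tS0].
  have sS0 : S0 \subset X by apply: proper_sub.
  have cS0 : #|S0| <= n by rewrite -ltnS; apply: leq_trans hX; apply: proper_card.
  have H1 : forall S : {set T}, S \subset S0 -> #|S| <= #|NB (NB Y S0) S|.
    move=> S sS; have -> : NB (NB Y S0) S = NB Y S.
      apply/setP=> y; rewrite !inE; case E: [exists s in S, r s y]; rewrite ?andbF // !andbT.
      case: (y \in Y) => //=; case/existsP: E => s /andP[sS' rs].
      by apply/existsP; exists s; rewrite rs (subsetP sS).
    by apply: hH; apply: subset_trans sS0.
  have [f1 [i1 h1]] := IH S0 (NB Y S0) cS0 H1.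
  have cX1 : #|X :\: S0| <= n.
    have := cardsID S0 X; rewrite (setIidPr sS0) => E.
    have : 0 < #|S0| by rewrite card_gt0.
    move: hX; rewrite -E => a b; toP; lia.
  have H2 : forall S : {set T}, S \subset X :\: S0 -> #|S| <= #|NB (Y :\: NB Y S0) S|.
    move=> S sS.
    have sSX : S :|: S0 \subset X.
      by rewrite subUset sS0 andbT; apply: subset_trans sS (subsetDl _ _).
    have h := hH _ sSX.
    have dS : [disjoint S & S0].
      rewrite disjoints_subset; apply/subsetP=> z zS; have := subsetP sS z zS.
      by rewrite !inE => /andP[].
    have cU : #|S :|: S0| = #|S| + #|S0| by apply/eqP; rewrite (leq_card_setU S S0).2.
    have sub : NB Y (S :|: S0) \subset NB (Y :\: NB Y S0) S :|: NB Y S0.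
      apply/subsetP=> y; rewrite !inE => /andP[yY /existsP[s /andP[]]].
      rewrite inE yY /= => /orP[sS' rs|sS0' rs].
      - case E: [exists s0 in S0, r s0 y] => /=; rewrite ?orbT //= orbF.
        by apply/existsP; exists s; rewrite sS' rs.
      - have -> : [exists s0 in S0, r s0 y] by apply/existsP; exists s; rewrite sS0' rs.
        by rewrite orbT.
    have := leq_trans h (subset_leq_card sub).
    have := (leq_card_setU (NB (Y :\: NB Y S0) S) (NB Y S0)).1.
    rewrite cU => a b; toP; lia.
  have [f2 [i2 h2]] := IH _ _ cX1 H2.
  exists (fun z => if z \in S0 then f1 z else f2 z); split.
  + move=> a b aX bX /=.
    case: (boolP (a \in S0)) => aS; case: (boolP (b \in S0)) => bS.
    * exact: i1.
    * have /andP[ha _] := h1 a aS.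
      have /andP[hb _] : (f2 b \in Y :\: NB Y S0) && r b (f2 b) by apply: h2; rewrite inE bS bX.
      by move=> E; rewrite E in ha; rewrite inE ha in hb.
    * have /andP[hb _] := h1 b bS.
      have /andP[ha _] : (f2 a \in Y :\: NB Y S0) && r a (f2 a) by apply: h2; rewrite inE aS aX.
      by move=> E; rewrite -E in hb; rewrite inE hb in ha.
    * by apply: i2; rewrite inE ?aS ?bS.
  + move=> z zX; case: (boolP (z \in S0)) => zS.
    * by have /andP[+ ->] := h1 z zS; rewrite inE => /andP[-> _].
    * have /andP[+ ->] : (f2 z \in Y :\: NB Y S0) && r z (f2 z) by apply: h2; rewrite inE zS zX.
      by rewrite inE => /andP[_ ->].
- move=> nT.
  case: (set_0Vmem X) => [X0|[x0 x0X]].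
    by exists id; split; [move=> a b _ _ | move=> z; rewrite X0 inE].
  have : 0 < #|NB Y [set x0]| by apply: leq_trans (hH [set x0] _); rewrite ?cards1 ?sub1set.
  rewrite card_gt0 => /set0Pn[y0]; rewrite inE => /andP[y0Y /existsP[s /andP[]]].
  rewrite inE => /eqP -> rxy.
  have cX1 : #|X :\ x0| <= n by move: hX; rewrite (cardsD1 x0 X) x0X.
  have H2 : forall S : {set T}, S \subset X :\ x0 -> #|S| <= #|NB (Y :\ y0) S|.
    move=> S sS; case: (boolP (S == set0)) => [/eqP -> |nS]; first by rewrite cards0.
    have pS : S \proper X.
      apply/properP; split; first by apply: subset_trans sS (subsetDl _ _).
      exists x0 => //; apply/negP=> xS; have := subsetP sS x0 xS; by rewrite !inE eqxx.
    have lt : #|S| < #|NB Y S|.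
      rewrite ltnNge; apply/negP=> le; move/existsP: nT; apply; exists S; by rewrite pS nS le.
    have -> : NB (Y :\ y0) S = NB Y S :\ y0.
      by apply/setP=> y; rewrite !inE andbA.
    move: lt; rewrite (cardsD1 y0 (NB Y S)); case: (y0 \in NB Y S) => //= a; toP; lia.
  have [f2 [i2 h2]] := IH _ _ cX1 H2.
  exists (fun z => if z == x0 then y0 else f2 z); split.
  + move=> a b aX bX /=.
    case: (eqVneq a x0) => [->|ax]; case: (eqVneq b x0) => [->|bx] //.
    * have := h2 b; rewrite !inE bx bX => /(_ isT) /andP[/andP[+ _] _].
      by move=> h E; rewrite -E eqxx in h.
    * have := h2 a; rewrite !inE ax aX => /(_ isT) /andP[/andP[+ _] _].
      by move=> h E; rewrite E eqxx in h.
    * by apply: i2; rewrite !inE ?ax ?bx.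
  + move=> z zX; case: (eqVneq z x0) => [->|zx]; first by rewrite y0Y rxy.
    by have := h2 z; rewrite !inE zx zX => /(_ isT) /andP[/andP[_ ->] ->].
Qed.
End Hall.

Lemma card_sum (T : finType) (P : pred T) : #|[set x | P x]| = \sum_x (P x : nat).
Proof. rewrite -sum1_card big_mkcond /=; apply: eq_bigr => x _; by rewrite inE; case: (P x). Qed.

Lemma card_sum_in (T : finType) (A : {set T}) (P : pred T) :
  #|[set x in A | P x]| = \sum_(x in A) (P x : nat).
Proof.
rewrite card_sum [RHS]big_mkcond /=; apply: eq_bigr => x _; by case: (x \in A).
Qed.

Section Graph.
Variables (V : finType) (adj : rel V).
Hypothesis sym : symmetric adj.
Hypothesis irr : irreflexive adj.
Hypothesis cub : cubic adj.

Definition deg (B : {set V}) (a : V) := #|[set b in B | adj a b]|.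

Lemma deg_split (A : {set V}) a : deg A a + deg (~: A) a = 3.
Proof.
rewrite /deg -(cub a) -(cardsID A (nbhd adj a)); congr (_ + _); apply: eq_card => b;
by rewrite !inE andbC.
Qed.

Lemma cut_sum A : cut_size adj A = \sum_(a in A) deg (~: A) a.
Proof.
rewrite /cut_size card_sum.
transitivity (\sum_i \sum_j ([&& i \in A, j \notin A & adj i j] : nat)).
  by rewrite pair_big.
rewrite [RHS]big_mkcond /=; apply: eq_bigr => i _; case: (i \in A) => /=.
  by rewrite /deg card_sum; apply: eq_bigr => j _; rewrite inE.
by rewrite big1.
Qed.

Lemma dcount (P Q : {set V}) : \sum_(a in P) deg Q a = \sum_(b in Q) deg P b.
Proof.
rewrite /deg.
under eq_bigr do rewrite card_sum_in.
under [RHS]eq_bigr do rewrite card_sum_in.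
rewrite exchange_big /=; apply: eq_bigr => b _; apply: eq_bigr => a _; by rewrite sym.
Qed.

Lemma cutC (A : {set V}) : cut_size adj (~: A) = cut_size adj A.
Proof. by rewrite !cut_sum setCK dcount. Qed.

Lemma degsum (A : {set V}) : \sum_(a in A) deg A a + cut_size adj A = 3 * #|A|.
Proof.
rewrite cut_sum -big_split /=.
rewrite (eq_bigr (fun => 3)); last by move=> a _; rewrite deg_split.
by rewrite sum_nat_const mulnC.
Qed.

Lemma close_cycle (A : {set V}) x s : uniq (x :: s) -> path adj x s ->
  all (mem A) (x :: s) -> 2 <= deg A x ->
  (forall y, y \in A -> adj x y -> y \in x :: s) -> has_cycle_in adj A.
Proof.
move=> U P Al D N.
have D1 : 0 < deg A x by apply: leq_trans D.
case: s U P Al N => [|x1 t] U P Al N.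
  move: D1; rewrite card_gt0 => /set0Pn[y]; rewrite inE => /andP[yA xy].
  by have := N y yA xy; rewrite inE => /eqP yx; rewrite yx irr in xy.
have : 0 < #|[set y in A | adj x y] :\ x1|.
  move: D; rewrite /deg (cardsD1 x1); case: (x1 \in _) => /= h; toP; lia.
rewrite card_gt0 => /set0Pn[y]; rewrite !inE => /and3P[yx1 yA xy].
have : y \in t.
  have := N y yA xy; rewrite !inE => /orP[/eqP e|/orP[/eqP e|//]].
    by rewrite e irr in xy.
  by rewrite e eqxx in yx1.
move=> yt; move: U P Al N; case/splitPr: yt => t1 t2 U P Al N.
have E : x :: x1 :: t1 ++ y :: t2 = (x :: x1 :: rcons t1 y) ++ t2 by rewrite /= cat_rcons.
exists (x :: x1 :: rcons t1 y); split.
- by rewrite /= size_rcons.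
- by move: U; rewrite E cat_uniq => /andP[].
- have E2 : x1 :: t1 ++ y :: t2 = (x1 :: rcons t1 y) ++ t2 by rewrite /= cat_rcons.
  move: P; rewrite E2 cat_path => /andP[P _].
  move: P => /= /andP[-> P]; by rewrite rcons_path P last_rcons sym xy.
- by move: Al; rewrite E all_cat => /andP[].
Qed.

Lemma ext_cycle (A : {set V}) (mind : forall a, a \in A -> 2 <= deg A a) k :
  forall x s, #|V| - size (x :: s) <= k -> uniq (x :: s) -> path adj x s ->
  all (mem A) (x :: s) -> has_cycle_in adj A.
Proof.
elim: k => [|k IH] x s hk U P Al;
  (case: (boolP [exists y, [&& y \in A, adj x y & y \notin x :: s]]);
   last first; [move=> nE; apply: (close_cycle U P Al);
     [by apply: mind; move: Al => /andP[] | move=> y yA xy; move/existsPn: nE => /(_ y);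
       by rewrite yA xy /= negbK] | case/existsP => y /and3P[yA xy ynot]]).
- have U' : uniq (y :: x :: s) by apply/andP.
  have := max_card (mem (y :: x :: s)); rewrite (card_uniqP U') /= => h.
  move: hk h; rewrite /= => a b; exfalso; toP; lia.
- apply: (IH y (x :: s)).
  + move: hk; rewrite /= => a; toP; lia.
  + by apply/andP.
  + by rewrite /= sym xy P.
  + by rewrite /= yA.
Qed.

Lemma deg_le (A : {set V}) a : deg A a <= #|A :\ a|.
Proof.
apply: subset_leq_card; apply/subsetP=> b; rewrite !inE => /andP[bA ab]; rewrite bA andbT.
by apply/eqP=> e; rewrite e irr in ab.
Qed.

Lemma has_cycle_mono (A B : {set V}) : A \subset B -> has_cycle_in adj A -> has_cycle_in adj B.
Proof.
move=> sAB [p [h1 h2 h3 h4]]; exists p; split=> //.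
by apply/allP=> z zp; apply: (subsetP sAB); move/allP: h4; apply.
Qed.

Lemma peel_identity (A : {set V}) a : a \in A ->
  \sum_(z in A) deg A z = 2 * deg A a + \sum_(z in A :\ a) deg (A :\ a) z.
Proof.
move=> aA; rewrite (bigD1 a aA) /=.
have E1 : \sum_(z in A | z != a) deg A z =
          \sum_(z in A | z != a) ((adj z a : nat) + deg (A :\ a) z).
  apply: eq_bigr => z /andP[zA za]; rewrite /deg (cardsD1 a [set b in A | adj z b]) inE aA /=.
  congr (_ + _); apply: eq_card => b; by rewrite !inE andbA.
have E2 : \sum_(z in A | z != a) (adj z a : nat) = deg A a.
  rewrite /deg card_sum_in (bigD1 a aA) /= irr add0n.
  by apply: eq_bigr => z _; rewrite sym.
have E3 : \sum_(z in A | z != a) deg (A :\ a) z = \sum_(z in A :\ a) deg (A :\ a) z.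
  by apply: eq_bigl => z; rewrite !inE andbC.
by rewrite E1 big_split /= E2 E3 mul2n -addnn addnA.
Qed.

Lemma peel n : forall A : {set V}, #|A| <= n -> A != set0 ->
  2 * #|A| <= \sum_(a in A) deg A a -> has_cycle_in adj A.
Proof.
elim: n => [|n IH] A hA nA hS.
  by move: hA; rewrite leqn0 cards_eq0 (negbTE nA).
case: (boolP [exists a in A, deg A a <= 1]).
- case/existsP=> a /andP[aA da].
  have cA := cardsD1 a A; rewrite aA add1n in cA.
  move: hS; rewrite (peel_identity aA) => hS.
  have dl := deg_le A a.
  apply: (has_cycle_mono (subsetDl A [set a])).
  apply: IH.
  + move: hA; rewrite cA /= => ?; toP; lia.
  + apply/negP=> /eqP e; move: dl; rewrite e cards0 leqn0 => /eqP d0.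
    move: hS; rewrite d0 e big_set0 cA e cards0; by [].
  + move: hS; rewrite cA => ?; toP; lia.
- move=> nE; case/set0Pn: nA => x xA.
  apply: (@ext_cycle A _ #|V| x [::]).
  + move=> a aA; move/existsPn: nE => /(_ a); rewrite aA /= -ltnNge; by [].
  + by rewrite leq_subr.
  + by [].
  + by [].
  + by rewrite /= xA.
Qed.

Lemma cyc_contra (cyc : cyc4_edge_connected adj) (A : {set V}) :
  A != set0 -> ~: A != set0 -> cut_size adj A <= #|A| -> cut_size adj A <= #|~: A| ->
  cut_size adj A < 4 -> False.
Proof.
move=> nA nC c1 c2 c3.
have h1 := degsum A; have h2 := degsum (~: A); rewrite cutC in h2.
have s1 : 2 * #|A| <= \sum_(a in A) deg A a by move: c1 => ?; toP; lia.
have s2 : 2 * #|~: A| <= \sum_(a in ~: A) deg (~: A) a by move: c2 => ?; toP; lia.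
have := cyc A (peel (leqnn _) nA s1) (peel (leqnn _) nC s2).
by rewrite leqNgt c3.
Qed.

Lemma pm_of_inv (g : V -> V) : (forall z, g (g z) = z) -> (forall z, adj z (g z)) ->
  perfect_matching adj [set [set z; g z] | z : V].
Proof.
move=> gK ga; apply/andP; split.
  apply/forallP=> e; apply/implyP=> /imsetP[z _ ->]; apply/existsP; exists z.
  by apply/existsP; exists (g z); rewrite ga eqxx.
apply/forallP=> y.
have -> : [set e in [set [set z; g z] | z : V] | y \in e] = [set [set y; g y]].
  apply/setP=> e; rewrite !inE; apply/andP/eqP.
  - case=> /imsetP[z _ ->]; rewrite !inE => /orP[/eqP->|/eqP->] //.
    by rewrite gK setUC.
  - move=> ->; split; first by apply: imset_f.
    by rewrite !inE eqxx.
by rewrite cards1.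
Qed.

Section Ext.
Variable X : {set V}.
Hypothesis bip : forall a b, adj a b -> (a \in X) != (b \in X).
Hypothesis cyc : cyc4_edge_connected adj.
Hypothesis cXY : #|X| = #|~: X|.

Lemma nb_side a b : adj a b -> a \in X -> b \notin X.
Proof. by move=> ab aX; have := bip ab; rewrite aX. Qed.

Lemma hall_cond u v w x : u \in X -> w \in X -> u != w ->
  forall S : {set V}, S \subset X :\: [set u; w] ->
  #|S| <= #|NB adj (~: X :\: [set v; x]) S|.
Proof.
move=> uX wX uw S sS.
rewrite leqNgt; apply/negP => lt.
have sX : S \subset X by apply: subset_trans sS (subsetDl _ _).
have nS : S != set0 by apply/negP => /eqP e; move: lt; rewrite e cards0.
set T := NB adj (~: X) S.
have bT : forall a b, a \in S -> adj a b -> b \in T.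
  move=> a b aS ab; rewrite inE; apply/andP; split.
    by rewrite inE; apply: nb_side ab (subsetP sX a aS).
  by apply/existsP; exists a; rewrite aS ab.
have TX : forall b, b \in T -> b \notin X by move=> b; rewrite !inE => /andP[].
have cT : #|T| <= #|NB adj (~: X :\: [set v; x]) S| + 2.
  have sub : T \subset NB adj (~: X :\: [set v; x]) S :|: [set v; x].
    apply/subsetP => y yT; have yX := TX y yT; move: yT; rewrite !inE => /andP[_ ex].
    case: (y == v); rewrite ?orbT //=; case: (y == x); rewrite ?orbT //=.
    by rewrite orbF yX ex.
  apply: leq_trans (subset_leq_card sub) _; apply: leq_trans (leq_card_setU _ _).1 _.
  by rewrite leq_add2l cards2; case: (v != x).
have d3 : forall s, s \in S -> deg T s = 3.
  move=> s sS'; rewrite -(cub s); apply: eq_card => b; rewrite [in RHS]inE inE.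
  case E: (adj s b); rewrite ?andbF ?andbT //; by apply: bT E.
have sumT : \sum_(t in T) deg S t = 3 * #|S|.
  rewrite dcount (eq_bigr (fun => 3)); first by rewrite sum_nat_const mulnC.
  by move=> s sS'; apply: d3.
have dST : [disjoint S & T].
  rewrite disjoints_subset; apply/subsetP => z zS; rewrite inE; apply/negP => zT.
  by have := TX z zT; rewrite (subsetP sX z zS).
set A := S :|: T.
have cA : #|A| = #|S| + #|T| by apply/eqP; rewrite (leq_card_setU S T).2.
have cut1 : cut_size adj A + 3 * #|S| <= 3 * #|T|.
  rewrite cut_sum (bigID (fun a => a \in S)) /=.
  have -> : \sum_(a in A | a \in S) deg (~: A) a = 0.
    apply: big1 => a /andP[_ aS]; apply/eqP; rewrite cards_eq0; apply/eqP/setP => b.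
    rewrite !inE; case E: (adj a b); rewrite ?andbF ?andbT //.
    by have := bT a b aS E; rewrite !inE => ->; rewrite orbT.
  have -> : \sum_(a in A | a \notin S) deg (~: A) a = \sum_(a in T) deg (~: A) a.
    apply: eq_bigl => a; rewrite !inE; case: (boolP (a \in S)) => aS /=.
      by apply/esym/negP => h; have := (disjointFr dST aS); rewrite !inE h.
    by rewrite andbT.
  rewrite add0n -sumT -big_split /=.
  have -> : 3 * #|T| = \sum_(t in T) 3 by rewrite sum_nat_const mulnC.
  apply: leq_sum => t tT; rewrite -(deg_split S t) addnC leq_add2l.
  apply: subset_leq_card; apply/subsetP => b; rewrite !inE => /andP[+ ->].
  by rewrite negb_or => /andP[-> _].
have cX' : #|X :\: [set u; w]| + 2 = #|X|.
  have := cardsID [set u; w] X; rewrite (setIidPr _) ?cards2 ?uw //.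
    by move=> <-; rewrite addnC.
  by rewrite subUset !sub1set uX wX.
have cS : #|S| <= #|X :\: [set u; w]| := subset_leq_card sS.
have cV := cardsC X.
have cAc := cardsC A.
have nS1 : 0 < #|S| by rewrite card_gt0.
apply: (cyc_contra cyc (A := A)).
- case/set0Pn: nS => s sS'; apply/set0Pn; exists s; by rewrite inE sS'.
- rewrite -card_gt0; move: cAc; rewrite cA => ?; toP; lia.
- move: cut1; rewrite cA => ?; toP; lia.
- move: cut1 => ?; toP; lia.
- move: cut1 => ?; toP; lia.
Qed.

Lemma extend u v w x : u \in X -> w \in X -> v \notin X -> x \notin X ->
  u != w -> v != x -> adj u v -> adj w x ->
  exists M, [&& perfect_matching adj M, [set u; v] \in M & [set w; x] \in M].
Proof.
move=> uX wX vX xX uw vx uv wx.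
have [f [fi fh]] := hall_ind (leqnn _) (hall_cond v x uX wX uw).
pose f' z := if z == u then v else if z == w then x else f z.
have fX : forall z, z \in X -> z != u -> z != w -> [&& f z \notin X, f z != v, f z != x & adj z (f z)].
  move=> z zX zu zw.
  have zX' : z \in X :\: [set u; w] by rewrite !inE zX negb_or zu zw.
  have /andP[h1 ->] := fh z zX'.
  by move: h1; rewrite !inE negb_or => /andP[/andP[-> ->] ->].
have hf' : forall z, z \in X -> (f' z \notin X) && adj z (f' z).
  move=> z zX; rewrite /f'; case: (eqVneq z u) => [->|zu]; first by rewrite vX uv.
  case: (eqVneq z w) => [->|zw]; first by rewrite xX wx.
  by have /and4P[-> _ _ ->] := fX z zX zu zw.
have wu : w != u by rewrite eq_sym.
have fi' : {in X &, injective f'}.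
  move=> a b aX bX; rewrite /f'.
  case: (eqVneq a u) => [->|au]; case: (eqVneq b u) => [->|bu] //.
  - case: (eqVneq b w) => [_ e|bw e]; first by rewrite e eqxx in vx.
    by have /and4P[_ h _ _] := fX b bX bu bw; rewrite -e eqxx in h.
  - case: (eqVneq a w) => [_ e|aw e]; first by rewrite e eqxx in vx.
    by have /and4P[_ h _ _] := fX a aX au aw; rewrite e eqxx in h.
  - case: (eqVneq a w) => [->|aw]; case: (eqVneq b w) => [->|bw] //.
    + by move=> e; have /and4P[_ _ h _] := fX b bX bu bw; rewrite -e eqxx in h.
    + by move=> e; have /and4P[_ _ h _] := fX a aX au aw; rewrite e eqxx in h.
    + apply: fi; by rewrite !inE negb_or ?au ?aw ?bu ?bw.
have im : f' @: X = ~: X.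
  apply/eqP; rewrite eqEcard card_in_imset // -cXY leqnn andbT.
  apply/subsetP => y /imsetP[z zX ->]; rewrite inE.
  by have /andP[] := hf' z zX.
have surj : forall y, y \notin X -> exists2 z, z \in X & f' z = y.
  move=> y yX; have : y \in f' @: X by rewrite im inE.
  by case/imsetP => z zX ->; exists z.
pose g z := if z \in X then f' z else odflt z [pick t in X | f' t == z].
have gX : forall z, z \in X -> g z = f' z by move=> z zX; rewrite /g zX.
have gY : forall y, y \notin X -> g y \in X /\ f' (g y) = y.
  move=> y yX; rewrite /g (negbTE yX).
  case: pickP => [t /andP[tX /eqP e]|none] /=; first by [].
  case: (surj y yX) => z zX e; have := none z; by rewrite zX e eqxx.
have gK : forall z, g (g z) = z.
  move=> z; case: (boolP (z \in X)) => zX.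
    have /andP[fzX _] := hf' z zX.
    have [h1 h2] := gY _ fzX.
    rewrite (gX z zX); apply: fi' => //; by rewrite h2.
  by have [h1 h2] := gY _ zX; rewrite gX.
have ga : forall z, adj z (g z).
  move=> z; case: (boolP (z \in X)) => zX.
    by rewrite gX //; have /andP[] := hf' z zX.
  have [h1 h2] := gY _ zX; have /andP[_ h] := hf' _ h1.
  by rewrite h2 in h; rewrite sym.
exists [set [set z; g z] | z : V]; rewrite pm_of_inv //=.
apply/andP; split; apply/imsetP.
  by exists u => //; rewrite gX // /f' eqxx.
by exists w => //; rewrite gX // /f' (negbTE wu) eqxx.
Qed.

End Ext.

End Graph.

Theorem mainTheorem14 (V : finType) (adj : rel V) :
  simple_graph adj -> cubic adj -> bipartite adj ->
  cyc4_edge_connected adj -> 8 <= #|V| ->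
  forall u v : V, adj u v -> 3 <= num_pm_containing adj u v.
Proof.
move=> [sym irr] cub [c bipc] cyc h8 u v uv.
pose X := [set z | c z == c u].
have bip : forall a b, adj a b -> (a \in X) != (b \in X).
  move=> a b ab; have := bipc a b ab; rewrite !inE.
  by case: (c a); case: (c b); case: (c u).
have d0 : forall (B : {set V}) a, (forall b, adj a b -> b \notin B) -> deg adj B a = 0.
  move=> B a h; apply/eqP; rewrite cards_eq0; apply/eqP/setP => b; rewrite !inE.
  by case E: (adj a b); rewrite ?andbF ?andbT //; apply/negbTE/h.
have cXY : #|X| = #|~: X|.
  have := dcount sym X (~: X).
  rewrite (eq_bigr (fun => 3)); last first.
    move=> a aX; have := deg_split cub X a; rewrite d0 ?add0n //.
    by move=> b ab; have := bip _ _ ab; rewrite aX; case: (b \in X).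
  rewrite [RHS](eq_bigr (fun => 3)); last first.
    move=> b bX; have := deg_split cub X b; rewrite [deg _ (~: X) b]d0 ?addn0 //.
    move=> a ba; have := bip _ _ ba; move: bX; rewrite !inE => /negbTE ->.
    by case: (a \in X).
  rewrite !sum_nat_const => /eqP; rewrite eqn_mul2r /= => /eqP.
  by [].
have uX : u \in X by rewrite inE.
have vX : v \notin X by have := bip _ _ uv; rewrite uX.
have [w wB] : exists w, w \notin nbhd adj u :|: nbhd adj v.
  case: (pickP (fun w => w \notin nbhd adj u :|: nbhd adj v)) => [w wB|none].
    by exists w.
  have : #|V| <= 6.
    apply: leq_trans (_ : #|nbhd adj u :|: nbhd adj v| <= 6).
      rewrite -cardsT; apply: subset_leq_card; apply/subsetP => z _.
      by move: (none z) => /negbFE.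
    apply: leq_trans (leq_card_setU _ _).1 _; by rewrite !cub.
  by move=> h; move: (leq_trans h8 h).
move: wB; rewrite !inE negb_or => /andP[nuw nvw].
have wu : w != u by apply/eqP => e; move: nvw; rewrite e sym uv.
have wv : w != v by apply/eqP => e; move: nuw; rewrite e uv.
have ex : forall y, adj w y -> exists M,
    [&& perfect_matching adj M, [set u; v] \in M & [set w; y] \in M].
  move=> y wy.
  have yu : y != u by apply/eqP => e; move: nuw; rewrite -e sym wy.
  have yv : y != v by apply/eqP => e; move: nvw; rewrite -e sym wy.
  case: (boolP (w \in X)) => wX.
    have yX : y \notin X by have := bip _ _ wy; rewrite wX.
    by apply: (extend sym irr cub bip cyc cXY uX wX vX yX _ _ uv wy); rewrite eq_sym.
  have yX : y \in X by have := bip _ _ wy; rewrite (negbTE wX); case: (y \in X).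
  have uy : u != y by rewrite eq_sym.
  have vw : v != w by rewrite eq_sym.
  have yw : adj y w by rewrite sym.
  have [M /and3P[h1 h2 h3]] := extend sym irr cub bip cyc cXY uX yX vX wX uy vw uv yw.
  by exists M; rewrite h1 h2 setUC h3.
pose Mf y := odflt set0 [pick M | [&& perfect_matching adj M, [set u; v] \in M & [set w; y] \in M]].
have Mfh : forall y, adj w y ->
    [&& perfect_matching adj (Mf y), [set u; v] \in Mf y & [set w; y] \in Mf y].
  move=> y wy; rewrite /Mf; case: pickP => [M -> //|none].
  by case: (ex y wy) => M h; have := none M; rewrite h.
have Mfi : {in nbhd adj w &, injective Mf}.
  move=> y1 y2; rewrite !inE => wy1 wy2 e.
  have /and3P[pm _ h1] := Mfh y1 wy1; have /and3P[_ _ h2] := Mfh y2 wy2.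
  rewrite e in pm h1.
  move: pm => /andP[_ /forallP /(_ w) /cards1P[e0 E]].
  have : [set w; y1] \in [set e0] by rewrite -E inE h1 set21.
  have : [set w; y2] \in [set e0] by rewrite -E inE h2 set21.
  rewrite !inE => /eqP E2 /eqP E1.
  have : y1 \in [set w; y2] by rewrite E2 -E1 set22.
  rewrite !inE => /orP[/eqP e1|/eqP //]; by rewrite -e1 irr in wy1.
rewrite /num_pm_containing -(cub w) -(card_in_imset Mfi).
apply: subset_leq_card; apply/subsetP => M /imsetP[y wy ->]; have wy2 : adj w y by move: wy; rewrite inE.
by rewrite inE; case/and3P: (Mfh y wy2) => h1 h2 _; apply/andP.
Qed.
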